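(* Let $S$ be a finite abelian semigroup with a zero element, its nonzero elements labelled $\lambda_i$, $i=0,\dots,N$, and $\lambda_{N+1}=0_S$; let $K_{i_1\cdots i_n}{}^{j}$ denote its $n$-selector restricted to indices $i_k,j\in\{0,\dots,N\}$. Let $\mathfrak g$ be a Lie superalgebra with basis $\{T_A\}$ and let $|T_{A_1}\cdots T_{A_n}|$ be an invariant tensor for $\mathfrak g$. Then for arbitrary constants $\alpha_j$, $$|T_{(A_1,i_1)}\cdots T_{(A_n,i_n)}|:=\sum_{j=0}^{N}\alpha_j K_{i_1\cdots i_n}{}^{j}\,|T_{A_1}\cdots T_{A_n}|$$ is an invariant tensor for the $0_S$-forced algebra obtained from $\mathfrak G=S\otimes\mathfrak g$.
   Context: A semigroup is a set with a closed associative multiplication; a zero element $0_S$ satisfies $0_S\lambda=\lambda0_S=0_S$ for all $\lambda\in S$. The $n$-selector $K_{\alpha_1\cdots\alpha_n}{}^{\gamma}$ equals $1$ if $\lambda_{\alpha_1}\cdots\lambda_{\alpha_n}=\lambda_\gamma$ and $0$ otherwise. If $\mathfrak g$ has basis $\{T_A\}$ with grading $\mathfrak q(A)$ and structure constants $C_{AB}{}^C$, the $0_S$-forced algebra of $S\otimes\mathfrak g$ is the vector space with basis $T_{(A,i)}$, $i=0,\dots,N$ (i.e. $\lambda_iT_A$ with the generators $0_ST_A$ set to zero), grading $\mathfrak q(A,i)=\mathfrak q(A)$ and bracket $[T_{(A,i)},T_{(B,j)}]=\sum_{k=0}^N K_{ij}{}^{k}C_{AB}{}^{C}T_{(C,k)}$.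 A rank-$n$ tensor $|T_{A_1}\cdots T_{A_n}|$ on a Lie superalgebra with structure constants $C_{AB}{}^C$ is invariant if for all $A_0,\dots,A_n$: $\sum_{p=1}^{n}(-1)^{\mathfrak q(A_0)(\mathfrak q(A_1)+\cdots+\mathfrak q(A_{p-1}))}C_{A_0A_p}{}^{B}|T_{A_1}\cdots T_{A_{p-1}}T_BT_{A_{p+1}}\cdots T_{A_n}|=0$. *)

(* Defs.v *)
From mathcomp Require Import all_boot all_order all_algebra.
Set Implicit Arguments. Unset Strict Implicit. Unset Printing Implicit Defensive.
Import GRing.Theory.
Local Open Scope ring_scope.

(* Nonzero elements of a semigroup S with zero z: these are the labels
   lambda_0, ..., lambda_N of the paper. *)
Definition nz (S : finType) (z : S) := {x : S | x != z}.

Definition sprod (S : Type) (mul : S -> S -> S) (s : seq S) : option S :=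
  match s with
  | [::] => None
  | x :: r => Some (foldl mul x r)
  end.

Definition selector (F : fieldType) (S : finType) (z : S) (mul : S -> S -> S)
    (n : nat) (ix : {ffun 'I_n -> nz z}) (j : nz z) : F :=
  (sprod mul [seq val (ix k) | k <- enum 'I_n] == Some (val j))%:R.

(* Lie superalgebra given by a basis indexed by I, Z2-grading q and
   structure constants C A B c = C_{AB}^c. *)
Definition is_lie_superalgebra (F : fieldType) (I : finType) (q : I -> bool)
    (C : I -> I -> I -> F) : Prop :=
  (forall A B c, C A B c = - ((-1) ^+ (q A * q B) * C B A c)) /\
  (forall A B c, C A B c != 0 -> q c = q A (+) q B) /\
  (forall A B c E,
     (-1) ^+ (q A * q c) * \sum_(D : I) C B c D * C A D E
   + (-1) ^+ (q B * q A) * \sum_(D : I) C c A D * C B D E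
   + (-1) ^+ (q c * q B) * \sum_(D : I) C A B D * C c D E = 0).

Definition upd (I : finType) (n : nat) (a : {ffun 'I_n -> I}) (p : 'I_n) (B : I)
  : {ffun 'I_n -> I} := [ffun k => if k == p then B else a k].

Definition invariant_tensor (F : fieldType) (I : finType) (q : I -> bool)
    (C : I -> I -> I -> F) (n : nat) (t : {ffun 'I_n -> I} -> F) : Prop :=
  forall (A0 : I) (a : {ffun 'I_n -> I}),
    \sum_(p < n) (-1) ^+ (q A0 * \sum_(k < n | (k < p)%N) q (a k))
                 * \sum_(B : I) C A0 (a p) B * t (upd a p B) = 0.

(* The 0_S-forced algebra of S (x) g: basis T_(A,i), i nonzero. *)
Definition forced_grading (I S : finType) (z : S) (q : I -> bool)
  : (I * nz z)%type -> bool := fun Ai => q Ai.1.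

Definition forced_consts (F : fieldType) (I S : finType) (z : S)
    (mul : S -> S -> S) (C : I -> I -> I -> F)
  : (I * nz z)%type -> (I * nz z)%type -> (I * nz z)%type -> F :=
  fun Ai Bj Ck =>
    ((mul (val Ai.2) (val Bj.2) == val Ck.2)%:R : F) * C Ai.1 Bj.1 Ck.1.

Definition forced_tensor (F : fieldType) (I S : finType) (z : S)
    (mul : S -> S -> S) (n : nat) (alpha : nz z -> F)
    (t : {ffun 'I_n -> I} -> F) (a : {ffun 'I_n -> (I * nz z)%type}) : F :=
  \sum_(j : nz z) alpha j * selector F mul [ffun k => (a k).2] j
                  * t [ffun k => (a k).1].

(* Main.v *)
Require Import Defs.
From mathcomp Require Import all_boot all_order all_algebra.
From mathcomp Require Import ring.
Import GRing.Theory.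
Set Implicit Arguments. Unset Strict Implicit.
Local Open Scope ring_scope.

Section Aux.
Variables (S : finType) (mul : S -> S -> S) (z : S).
Hypotheses (mulA : associative mul) (mulC : commutative mul)
    (mul0s : forall x, mul z x = z) (muls0 : forall x, mul x z = z).

Lemma foldl_mulA c x r : foldl mul (mul c x) r = mul c (foldl mul x r).
Proof. by elim: r x => [|y r IH] x //=; rewrite -mulA IH. Qed.

Lemma foldl_z0 r : foldl mul z r = z.
Proof. by elim: r => [|y r IH] //=; rewrite mul0s. Qed.

Lemma foldl_z x r : (x = z \/ z \in r) -> foldl mul x r = z.
Proof.
elim: r x => [|y r IH] x /=; first by case=> // ->.
case=> [->|]; first by rewrite mul0s foldl_z0.
rewrite in_cons => /orP [/eqP <-|h]; first by rewrite muls0 foldl_z0.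
by apply: IH; right.
Qed.

Lemma swap3 x c y : mul x (mul c y) = mul c (mul x y).
Proof. by rewrite mulA (mulC x c) -mulA. Qed.

Lemma foldl_upd (T : eqType) (s : seq T) (g : T -> S) p c x :
  uniq s -> p \in s ->
  foldl mul x [seq (if k == p then mul c (g k) else g k) | k <- s]
  = mul c (foldl mul x (map g s)).
Proof.
elim: s x => [|k s IH] x //= /andP [kns us].
case: eqP => [<-|/eqP nkp] hp.
  have -> : [seq (if k0 == k then mul c (g k0) else g k0) | k0 <- s] = map g s.
    by apply/eq_in_map => k' k's /=; case: eqP => // e; rewrite -e k's in kns.
  by rewrite swap3 foldl_mulA.
apply: IH => //; by move: hp; rewrite in_cons eq_sym (negbTE nkp).
Qed.

Lemma sprod_upd n (g : 'I_n -> S) p c :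
  sprod mul [seq (if k == p then mul c (g k) else g k) | k <- enum 'I_n]
  = omap (mul c) (sprod mul (map g (enum 'I_n))).
Proof.
have hp : p \in enum 'I_n by rewrite mem_enum.
have hu := enum_uniq 'I_n.
move: hp hu; case: (enum 'I_n) => [|k s] //= hp /andP [kns us]; congr Some.
case: eqP => [e|/eqP nkp].
  have -> : [seq (if k0 == p then mul c (g k0) else g k0) | k0 <- s] = map g s.
    by apply/eq_in_map => k' k's /=; case: eqP => // e'; rewrite e -e' k's in kns.
  by rewrite foldl_mulA.
apply: foldl_upd => //; by move: hp; rewrite in_cons eq_sym (negbTE nkp).
Qed.

Lemma sprod_upd_z n (g : 'I_n -> S) p c : mul c (g p) = z ->
  omap (mul c) (sprod mul (map g (enum 'I_n))) = Some z.
Proof.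
move=> hz; rewrite -(sprod_upd g p).
have hp : p \in enum 'I_n by rewrite mem_enum.
move: hp; case: (enum 'I_n) => [|k s] //= hp; congr Some.
apply: foldl_z; case: eqP => [->|/eqP nkp]; first by left.
right; apply/mapP; exists p; last by rewrite eqxx.
by move: hp; rewrite in_cons eq_sym (negbTE nkp).
Qed.

End Aux.

Theorem theorem4 (F : fieldType) (S : finType) (mul : S -> S -> S) (z : S)
    (mulA : associative mul) (mulC : commutative mul)
    (mul0s : forall x, mul z x = z) (muls0 : forall x, mul x z = z)
    (I : finType) (q : I -> bool) (C : I -> I -> I -> F)
    (hg : is_lie_superalgebra q C)
    (n : nat) (t : {ffun 'I_n -> I} -> F)
    (ht : invariant_tensor q C t)
    (alpha : nz z -> F) :
  invariant_tensor (@forced_grading I S z q) (forced_consts mul C)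
    (forced_tensor mul alpha t).
Proof.
move=> A0 a.
set c := val A0.2.
set A := [ffun k => (a k).1].
set g := fun k => val (a k).2.
set K := \sum_(j : nz z) alpha j *
   ((omap (mul c) (sprod mul (map g (enum 'I_n))) == Some (val j))%:R : F).
have perj : forall p (j : nz z),
  \sum_(j' : nz z) ((mul c (g p) == val j')%:R : F) *
     ((sprod mul [seq (if k == p then val j' else g k) | k <- enum 'I_n]
        == Some (val j))%:R : F)
  = ((omap (mul c) (sprod mul (map g (enum 'I_n))) == Some (val j))%:R : F).
  move=> p j.
  case: (boolP (mul c (g p) == z)) => [/eqP hz|hnz].
    rewrite (sprod_upd_z mulA mulC mul0s muls0 hz) big1; last first.
      move=> j' _; case: eqP => [e|_]; last by rewrite mul0r.
      by case/negP: (valP j'); rewrite -e hz.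
    by case: eqP => // -[e]; case/negP: (valP j); by apply/eqP; exact: (esym e).
  rewrite (bigD1 (exist (fun x => x != z) _ hnz : nz z)) //= eqxx mul1r big1; last first.
    move=> j' hj'; case: eqP => [e|_]; last by rewrite mul0r.
    by case/eqP: hj'; apply: val_inj; rewrite /= e.
  rewrite addr0 -(sprod_upd mulA mulC g p).
  congr ((_ == _)%:R); congr (sprod mul _); apply: eq_map => k.
  by case: eqP => // ->.
have key : forall p,
  \sum_(B : I * nz z) forced_consts mul C A0 (a p) B
      * forced_tensor mul alpha t (upd a p B)
  = K * \sum_(b : I) C A0.1 (a p).1 b * t (upd A p b).
  move=> p.
  transitivity (\sum_(b : I) \sum_(j' : nz z) forced_consts mul C A0 (a p) (b, j')
      * forced_tensor mul alpha t (upd a p (b, j'))).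
    by symmetry; rewrite pair_bigA; apply: eq_bigr => -[].
  rewrite mulr_sumr.
  apply: eq_bigr => b _.
  have eT : forall j' : nz z, [ffun k => (upd a p (b, j') k).1] = upd A p b.
    by move=> j'; apply/ffunP => k; rewrite !ffunE; case: (k == p).
  have eS : forall j' j : nz z,
     selector F mul [ffun k => (upd a p (b, j') k).2] j
     = ((sprod mul [seq (if k == p then val j' else g k) | k <- enum 'I_n]
        == Some (val j))%:R : F).
    move=> j' j; rewrite /selector; congr ((sprod mul _ == _)%:R).
    by apply: eq_map => k; rewrite !ffunE; case: (k == p).
  rewrite /forced_consts /forced_tensor /=.
  under eq_bigr => j' _ do rewrite eT; under eq_bigr => j' _ do
    under eq_bigr => j _ do rewrite eS.
  rewrite /K mulr_suml.
  under eq_bigr => j' _ do rewrite mulr_sumr.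
  rewrite exchange_big; apply: eq_bigr => j _.
  rewrite -(perj p j) mulr_sumr mulr_suml; apply: eq_bigr => j' _.
  rewrite /c /g /=; ring.
transitivity (K * \sum_(p < n) (-1) ^+ (q A0.1 * \sum_(k < n | (k < p)%N) q (A k))
                 * \sum_(B : I) C A0.1 (A p) B * t (upd A p B)).
  rewrite mulr_sumr; apply: eq_bigr => p _; rewrite key mulrCA.
  congr (_ * (_ ^+ (_ * _) * _)).
    by apply: eq_bigr => k _; rewrite ffunE.
  by apply: eq_bigr => B _; rewrite ffunE.
by rewrite ht mulr0.
Qed.
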